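(* Let $T$ be an interface element, labelled (interchanging the roles of $+$ and $-$, including $\beta^\pm$, if necessary) so that $|\overline{\mathcal I^-}|\le|\overline{\mathcal I^+}|$. Let $F\in l$ be arbitrary and put $\mathbf v(F)=\bar{\mathbf n}$. Define the vectors $$\boldsymbol\gamma=\big(\nabla\psi_{i,T}(F)\cdot\bar{\mathbf n}\big)_{i\in\overline{\mathcal I^-}},\qquad \boldsymbol\delta=\Big(\frac1{|b_i|}\int_{b_i\cap T^-}L(X)\,ds\Big)_{i\in\overline{\mathcal I^-}},\qquad L(X)=\bar{\mathbf n}\cdot(X-D).$$ Then, for every interface location, $\boldsymbol\gamma^T\boldsymbol\delta\in[0,1]$.
   Context: On a mesh element $T$ (a triangle or a rectangle) with edges $b_i$, $i\in\mathcal I=\{1,\dots,N\}$ ($N=3$ for triangles, $N=4$ for rectangles), $\Pi_T=\mathrm{span}\{1,x,y\}$ (Crouzeix–Raviart, triangles) or $\Pi_T=\mathrm{span}\{1,x,y,x^2-y^2\}$ (rotated-$Q_1$, rectangles), and $\psi_{i,T}\in\Pi_T$ are the shape functions with $\frac{1}{|b_j|}\int_{b_j}\psi_{i,T}\,ds=\delta_{ij}$. The mesh is a Cartesian triangular or rectangular mesh of mesh size $h$. $T$ is an interface element: a curve $\Gamma$ separating $\Omega^+$ from $\Omega^-$ crosses the interior of $T$ and meets $\partial T$ at exactly two points $D,E$ lying on different edges; $l$ is the segment $DE$, $\bar{\mathbf n}$ a unit normal to $l$ (either orientation; the quantity $\boldsymbol\gamma^T\boldsymbol\delta$ does not depend on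 it), and $T^\pm=T\cap\Omega^\pm$. Index sets: $\mathcal I^s=\{i: b_i\subseteq\overline{T^s}\}$, $\mathcal I^{int}=\{i: b_i\cap T^+\neq\emptyset\text{ and }b_i\cap T^-\neq\emptyset\}$, $\overline{\mathcal I^s}=\mathcal I^s\cup\mathcal I^{int}$, $s=\pm$. Note that $b_i\cap T^-$ coincides with the part of $b_i$ on the corresponding side of $l$, since $\Gamma$ and $l$ meet $\partial T$ at the same points. *)

(* Defs.v *)
From Stdlib Require Import Reals Lra List ClassicalEpsilon.
Import ListNotations.
Open Scope R_scope.

(* Tri b1 b2 : right isosceles triangle with legs of length h parallel to the
     axes, right-angle vertex (x0,y0), other vertices (x0 +- h, y0), (x0, y0 +- h)
     (signs given by b1, b2); these are all triangles of a Cartesian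
     triangular mesh (squares cut along a diagonal).
   Rect : the square [x0, x0+h] x [y0, y0+h]. *)
Inductive elem_kind : Type := Tri (b1 b2 : bool) | Rect.

Definition nedges (k : elem_kind) : nat :=
  match k with Tri _ _ => 3%nat | Rect => 4%nat end.

Definition sgnb (b : bool) : R := if b then 1 else -1.

Definition vert (k : elem_kind) (x0 y0 h : R) (i : nat) : R * R :=
  match k with
  | Tri b1 b2 =>
      match i with
      | O => (x0, y0)
      | S O => (x0 + sgnb b1 * h, y0)
      | _ => (x0, y0 + sgnb b2 * h)
      end
  | Rect =>
      match i with
      | O => (x0, y0)
      | S O => (x0 + h, y0)
      | S (S O) => (x0 + h, y0 + h)
      | _ => (x0, y0 + h)
      end
  end.

Definition edge_pt (k : elem_kind) (x0 y0 h : R) (i : nat) (t : R) : R * R :=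
  let P := vert k x0 y0 h i in
  let Q := vert k x0 y0 h (Nat.modulo (S i) (nedges k)) in
  (fst P + t * (fst Q - fst P), snd P + t * (snd Q - snd P)).

Definition on_edge (k : elem_kind) (x0 y0 h : R) (i : nat) (X : R * R) : Prop :=
  exists t, 0 <= t <= 1 /\ X = edge_pt k x0 y0 h i t.

(* edge_avg_is f b_i v  :<->  (1/|b_i|) \int_{b_i} f ds = v
   (arc-length substitution s = |b_i| t). *)
Definition edge_avg_is (f : R * R -> R) (k : elem_kind) (x0 y0 h : R)
  (i : nat) (v : R) : Prop :=
  exists pr : Riemann_integrable (fun t => f (edge_pt k x0 y0 h i t)) 0 1,
    RiemannInt pr = v.

Fixpoint sumR (n : nat) (f : nat -> R) : R :=
  match n with O => 0 | S n' => sumR n' f + f n' end.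

(* basis of Pi_T: 1, x, y (CR, m < 3) and additionally x^2 - y^2 (rotated Q1) *)
Definition basis (m : nat) (X : R * R) : R :=
  match m with
  | O => 1
  | S O => fst X
  | S (S O) => snd X
  | _ => fst X ^ 2 - snd X ^ 2
  end.

Definition basis_dx (m : nat) (X : R * R) : R :=
  match m with O => 0 | S O => 1 | S (S O) => 0 | _ => 2 * fst X end.
Definition basis_dy (m : nat) (X : R * R) : R :=
  match m with O => 0 | S O => 0 | S (S O) => 1 | _ => - (2 * snd X) end.

Definition piT (k : elem_kind) (a : nat -> R) (X : R * R) : R :=
  sumR (nedges k) (fun m => a m * basis m X).

Definition grad_dot (k : elem_kind) (a : nat -> R) (X nv : R * R) : R :=
  sumR (nedges k)
    (fun m => a m * (basis_dx m X * fst nv + basis_dy m X * snd nv)).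

Definition Lfun (D nv X : R * R) : R :=
  fst nv * (fst X - fst D) + snd nv * (snd X - snd D).

(* T^- is the part of T on the side { sigma * L > 0 } of l, T^+ the side
   { sigma * L < 0 } (sigma = +-1 selects which side is labelled minus). *)
Definition in_minus (sigma : R) (D nv X : R * R) : Prop := 0 < sigma * Lfun D nv X.
Definition in_plus (sigma : R) (D nv X : R * R) : Prop := sigma * Lfun D nv X < 0.

Definition I_minus k x0 y0 h sigma D nv (i : nat) : Prop :=
  forall t, 0 <= t <= 1 -> 0 <= sigma * Lfun D nv (edge_pt k x0 y0 h i t).
Definition I_plus k x0 y0 h sigma D nv (i : nat) : Prop :=
  forall t, 0 <= t <= 1 -> sigma * Lfun D nv (edge_pt k x0 y0 h i t) <= 0.
Definition I_int k x0 y0 h sigma D nv (i : nat) : Prop :=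
  (exists t, 0 <= t <= 1 /\ in_minus sigma D nv (edge_pt k x0 y0 h i t)) /\
  (exists t, 0 <= t <= 1 /\ in_plus sigma D nv (edge_pt k x0 y0 h i t)).
Definition Ibar_minus k x0 y0 h sigma D nv (i : nat) : Prop :=
  I_minus k x0 y0 h sigma D nv i \/ I_int k x0 y0 h sigma D nv i.
Definition Ibar_plus k x0 y0 h sigma D nv (i : nat) : Prop :=
  I_plus k x0 y0 h sigma D nv i \/ I_int k x0 y0 h sigma D nv i.

Definition pbool (P : Prop) : bool :=
  if excluded_middle_informative P then true else false.
Definition card_idx (N : nat) (P : nat -> Prop) : nat :=
  length (filter (fun i => pbool (P i)) (seq 0 N)).
Definition sum_idx (N : nat) (P : nat -> Prop) (g : nat -> R) : R :=
  fold_right Rplus 0 (map g (filter (fun i => pbool (P i)) (seq 0 N))).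

(* integrand of delta_i: L restricted to T^- (zero elsewhere) *)
Definition L_minus (sigma : R) (D nv : R * R) (X : R * R) : R :=
  if Rlt_dec 0 (sigma * Lfun D nv X) then Lfun D nv X else 0.

(* Main.v *)
Require Import Defs.
From Stdlib Require Import Reals Lra Psatz List Lia ClassicalEpsilon.
From Coquelicot Require Import Coquelicot.
Import ListNotations.
Open Scope R_scope.
Lemma RInt_lin (a b p q : R) :
  RInt (fun t => a + b * t) p q = a * (q - p) + b * (q*q - p*p) / 2.
Proof.
  apply is_RInt_unique.
  assert (H := is_RInt_derive (fun t => a * t + b * (t*t) / 2) (fun t => a + b * t) p q).
  replace (a * (q - p) + b * (q * q - p * p) / 2) with
    (minus (a * q + b * (q*q)/2) (a * p + b * (p*p)/2)).
  2:{ unfold minus, plus, opp; simpl. field. }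
  apply H.
  - intros x _. auto_derive; auto. field.
  - intros x _. apply (@ex_derive_continuous R_AbsRing R_NormedModule). auto_derive; auto.
Qed.

Lemma RInt_quad (a b g : R) :
  RInt (fun t => a + b * t + g * (t*t)) 0 1 = a + b / 2 + g / 3.
Proof.
  apply is_RInt_unique.
  assert (H := is_RInt_derive (fun t => a * t + b * (t*t) / 2 + g * (t*t*t)/3)
        (fun t => a + b * t + g * (t*t)) 0 1).
  replace (a + b / 2 + g / 3) with
    (minus (a * 1 + b * (1*1)/2 + g * (1*1*1)/3) (a * 0 + b * (0*0)/2 + g*(0*0*0)/3)).
  2:{ unfold minus, plus, opp; simpl. field. }
  apply H.
  - intros x _. auto_derive; auto. field.
  - intros x _. apply (@ex_derive_continuous R_AbsRing R_NormedModule). auto_derive; auto.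
Qed.

Lemma riemann_quad (f : R -> R) a b g (pr : Riemann_integrable f 0 1) :
  (forall t, f t = a + b * t + g * (t*t)) -> RiemannInt pr = a + b/2 + g/3.
Proof.
  intros Hf. rewrite <- RInt_Reals. rewrite <- (RInt_quad a b g).
  apply RInt_ext. intros; apply Hf.
Qed.

Lemma riemann_simpson (f : R -> R) (pr : Riemann_integrable f 0 1) :
  (exists a b g, forall t, f t = a + b * t + g * (t*t)) ->
  RiemannInt pr = (f 0 + 4 * f (1/2) + f 1) / 6.
Proof.
  intros [a [b [g Hf]]]. rewrite (riemann_quad f a b g pr Hf).
  rewrite !Hf. field.
Qed.

Lemma ex_RInt_lin a b p q : ex_RInt (fun t => a + b * t) p q.
Proof.
  apply (@ex_RInt_continuous R_CompleteNormedModule). intros z _. apply (@ex_derive_continuous R_AbsRing R_NormedModule). auto_derive; auto.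
Qed.

Ltac rfix := match goal with |- @eq _ ?x ?y => change (@eq R x y) end.

Definition Pf (u v : R) : R :=
  if Rle_dec 0 u then (if Rle_dec 0 v then (u+v)/2 else u*u/(2*(u-v)))
  else (if Rle_dec 0 v then v*v/(2*(v-u)) else 0).

Lemma riemann_pos (f : R -> R) (s a b : R) (pr : Riemann_integrable f 0 1) :
  (s = 1 \/ s = -1) ->
  (forall t, f t = if Rlt_dec 0 (s * (a + b * t)) then a + b * t else 0) ->
  RiemannInt pr = s * Pf (s*a) (s*(a+b)).
Proof.
  intros Hs Hf. rewrite <- RInt_Reals.
  assert (Hss : s * s = 1) by (destruct Hs; subst; lra).
  assert (Hlin : forall t, s * (a + b*t) = (1-t) * (s*a) + t * (s*(a+b))) by (intros; ring).
  set (u := s*a) in *. set (v := s*(a+b)) in *.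
  assert (Ha : a = s * u) by (unfold u; rewrite <- Rmult_assoc, Hss; ring).
  assert (Hb : b = s * (v - u)) by (unfold u, v; rewrite Rmult_minus_distr_l, <- !Rmult_assoc, Hss; ring).
  unfold Pf.
  destruct (Rle_dec 0 u) as [Hu|Hu]; destruct (Rle_dec 0 v) as [Hv|Hv].
  - rewrite (RInt_ext f (fun t => a + b * t)).
    + rewrite RInt_lin. rewrite Ha, Hb. field.
    + intros t Ht. rewrite Rmin_left, Rmax_right in Ht by lra.
      rewrite Hf. destruct (Rlt_dec _ _) as [|Hn]; auto.
      rewrite Hlin in Hn.
      assert (u = 0 /\ v = 0) as [E1 E2] by (split; nra).
      rewrite Ha, Hb, E1, E2. rfix. ring.
  - apply Rnot_le_lt in Hv.
    destruct (Req_dec u 0) as [Hu0|Hu0].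
    + rewrite (RInt_ext f (fun t => 0 + 0 * t)).
      * rewrite RInt_lin, Hu0. field. lra.
      * intros t Ht. rewrite Rmin_left, Rmax_right in Ht by lra.
        rewrite Hf. destruct (Rlt_dec _ _) as [Hp|]; [|rfix; ring].
        rewrite Hlin, Hu0 in Hp. nra.
    + set (t0 := u / (u - v)).
      assert (Ht0 : 0 < t0 < 1).
      { unfold t0. split. apply Rdiv_lt_0_compat; lra.
        apply Rmult_lt_reg_r with (u - v). lra. field_simplify; lra. }
      assert (Hz : u + t0 * (v - u) = 0) by (unfold t0; field; lra).
      assert (E1 : RInt f 0 t0 = RInt (fun t => a + b * t) 0 t0).
      { apply RInt_ext. intros t Ht. rewrite Rmin_left, Rmax_right in Ht by lra.
        rewrite Hf. destruct (Rlt_dec _ _) as [|Hn]; auto. exfalso. apply Hn.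
        rewrite Hlin. nra. }
      assert (E2 : RInt f t0 1 = RInt (fun t => 0 + 0 * t) t0 1).
      { apply RInt_ext. intros t Ht. rewrite Rmin_left, Rmax_right in Ht by lra.
        rewrite Hf. destruct (Rlt_dec _ _) as [Hp|]; [|rfix; ring]. exfalso.
        rewrite Hlin in Hp. nra. }
      rewrite <- (RInt_Chasles f 0 t0 1).
      * rewrite E1, E2, !RInt_lin. unfold plus; simpl.
        rewrite Ha, Hb. unfold t0. field; lra.
      * apply (ex_RInt_ext (fun t => a + b * t)).
        { intros t Ht. rewrite Rmin_left, Rmax_right in Ht by lra.
          rewrite Hf. destruct (Rlt_dec _ _) as [|Hn]; auto. exfalso. apply Hn.
          rewrite Hlin. nra. }
        apply ex_RInt_lin.
      * apply (ex_RInt_ext (fun t => 0 + 0 * t)).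
        { intros t Ht. rewrite Rmin_left, Rmax_right in Ht by lra.
          rewrite Hf. destruct (Rlt_dec _ _) as [Hp|]; [|rfix; ring]. exfalso.
          rewrite Hlin in Hp. nra. }
        apply ex_RInt_lin.
  - apply Rnot_le_lt in Hu.
    destruct (Req_dec v 0) as [Hv0|Hv0].
    + rewrite (RInt_ext f (fun t => 0 + 0 * t)).
      * rewrite RInt_lin, Hv0. field. lra.
      * intros t Ht. rewrite Rmin_left, Rmax_right in Ht by lra.
        rewrite Hf. destruct (Rlt_dec _ _) as [Hp|]; [|rfix; ring].
        rewrite Hlin, Hv0 in Hp. nra.
    + set (t0 := u / (u - v)).
      assert (Ht0 : 0 < t0 < 1).
      { unfold t0. split.
        replace (u / (u - v)) with ((-u) / (v - u)) by (field; lra).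
        apply Rdiv_lt_0_compat; lra.
        apply Rmult_lt_reg_r with (v - u). lra.
        replace (u / (u - v) * (v - u)) with (-u) by (field; lra). lra. }
      assert (Hlt : forall t, t0 < t -> 0 < (1 - t) * u + t * v).
      { intros t Ht. unfold t0 in Ht.
        assert (t * (v - u) > -u).
        { replace (-u) with (u / (u - v) * (v - u)) by (field; lra).
          apply Rmult_lt_compat_r; lra. }
        nra. }
      assert (Hgt : forall t, t < t0 -> (1 - t) * u + t * v < 0).
      { intros t Ht. unfold t0 in Ht.
        assert (t * (v - u) < -u).
        { replace (-u) with (u / (u - v) * (v - u)) by (field; lra).
          apply Rmult_lt_compat_r; lra. }
        nra. }
      assert (E1 : RInt f 0 t0 = RInt (fun t => 0 + 0 * t) 0 t0).
      { apply RInt_ext. intros t Ht. rewrite Rmin_left, Rmax_right in Ht by lra.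
        rewrite Hf. destruct (Rlt_dec _ _) as [Hp|]; [|rfix; ring]. exfalso.
        rewrite Hlin in Hp. specialize (Hgt t (proj2 Ht)). lra. }
      assert (E2 : RInt f t0 1 = RInt (fun t => a + b * t) t0 1).
      { apply RInt_ext. intros t Ht. rewrite Rmin_left, Rmax_right in Ht by lra.
        rewrite Hf. destruct (Rlt_dec _ _) as [|Hn]; auto. exfalso. apply Hn.
        rewrite Hlin. apply Hlt; lra. }
      rewrite <- (RInt_Chasles f 0 t0 1).
      * rewrite E1, E2, !RInt_lin. unfold plus; simpl.
        rewrite Ha, Hb. unfold t0. field; lra.
      * apply (ex_RInt_ext (fun t => 0 + 0 * t)).
        { intros t Ht. rewrite Rmin_left, Rmax_right in Ht by lra.
          rewrite Hf. destruct (Rlt_dec _ _) as [Hp|]; [|rfix; ring]. exfalso.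
          rewrite Hlin in Hp. specialize (Hgt t (proj2 Ht)). lra. }
        apply ex_RInt_lin.
      * apply (ex_RInt_ext (fun t => a + b * t)).
        { intros t Ht. rewrite Rmin_left, Rmax_right in Ht by lra.
          rewrite Hf. destruct (Rlt_dec _ _) as [|Hn]; auto. exfalso. apply Hn.
          rewrite Hlin. apply Hlt; lra. }
        apply ex_RInt_lin.
  - apply Rnot_le_lt in Hu. apply Rnot_le_lt in Hv.
    rewrite (RInt_ext f (fun t => 0 + 0 * t)).
    + rewrite RInt_lin. lra.
    + intros t Ht. rewrite Rmin_left, Rmax_right in Ht by lra.
      rewrite Hf. destruct (Rlt_dec _ _) as [Hp|]; [|rfix; ring].
      rewrite Hlin in Hp. nra.
Qed.
Fixpoint sumN (n : nat) (f : nat -> nat) : nat :=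
  match n with O => O | S n' => (sumN n' f + f n')%nat end.

Lemma fold_plus_init (l : list R) x : fold_right Rplus x l = fold_right Rplus 0 l + x.
Proof. induction l; simpl. ring. rewrite IHl. ring. Qed.

Lemma sum_idx_sumR N P g : sum_idx N P g = sumR N (fun i => if pbool (P i) then g i else 0).
Proof.
  unfold sum_idx. induction N as [|N IH]. reflexivity.
  rewrite seq_S, Nat.add_0_l, filter_app, map_app, fold_right_app. cbn [sumR filter].
  destruct (pbool (P N)); cbn [map fold_right].
  - rewrite fold_plus_init, IH. simpl. ring.
  - rewrite IH. ring.
Qed.

Lemma card_idx_sumN N P : card_idx N P = sumN N (fun i => if pbool (P i) then 1%nat else 0%nat).
Proof.
  unfold card_idx. induction N as [|N IH]. reflexivity.
  rewrite seq_S, Nat.add_0_l, filter_app, length_app, IH. cbn [sumN filter].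
  destruct (pbool (P N)); simpl; lia.
Qed.

Lemma sumR_ext n f g : (forall i, (i < n)%nat -> f i = g i) -> sumR n f = sumR n g.
Proof. induction n; intros; simpl. auto. rewrite IHn, H; auto. Qed.
Lemma sumN_ext n f g : (forall i, (i < n)%nat -> f i = g i) -> sumN n f = sumN n g.
Proof. induction n; intros; simpl. auto. rewrite IHn, H; auto. Qed.

Lemma pbool_iff (P Q : Prop) : (P <-> Q) -> pbool P = pbool Q.
Proof. intros. unfold pbool. destruct (excluded_middle_informative P);
  destruct (excluded_middle_informative Q); tauto. Qed.

Definition nxt k i := Nat.modulo (S i) (nedges k).

Lemma L_edge k x0 y0 h D nv i t :
  Lfun D nv (edge_pt k x0 y0 h i t) =
  Lfun D nv (vert k x0 y0 h i) + (Lfun D nv (vert k x0 y0 h (nxt k i)) - Lfun D nv (vert k x0 y0 h i)) * t.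
Proof. unfold Lfun, edge_pt, nxt. simpl. ring. Qed.

Definition uv k x0 y0 h (s : R) D nv j := s * Lfun D nv (vert k x0 y0 h j).

Definition IBm (u v : R) : Prop := (0 <= u /\ 0 <= v) \/ ((0 < u \/ 0 < v) /\ (u < 0 \/ v < 0)).
Definition IBp (u v : R) : Prop := (u <= 0 /\ v <= 0) \/ ((0 < u \/ 0 < v) /\ (u < 0 \/ v < 0)).

Lemma sL_edge k x0 y0 h s D nv i t :
  s * Lfun D nv (edge_pt k x0 y0 h i t) =
  (1 - t) * uv k x0 y0 h s D nv i + t * uv k x0 y0 h s D nv (nxt k i).
Proof. rewrite L_edge. unfold uv. ring. Qed.

Lemma int_iff k x0 y0 h s D nv i :
  I_int k x0 y0 h s D nv i <->
  let u := uv k x0 y0 h s D nv i in let v := uv k x0 y0 h s D nv (nxt k i) in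
  (0 < u \/ 0 < v) /\ (u < 0 \/ v < 0).
Proof.
  unfold I_int, in_minus, in_plus. simpl. split.
  - intros [[t [Ht H1]] [t' [Ht' H2]]]. rewrite sL_edge in H1, H2. split.
    + destruct (Rlt_dec 0 (uv k x0 y0 h s D nv i)); [now left|].
      right. nra.
    + destruct (Rlt_dec (uv k x0 y0 h s D nv i) 0); [now left|].
      right. nra.
  - intros [A B]. split.
    + destruct A; [exists 0 | exists 1]; rewrite sL_edge; split; try lra.
    + destruct B; [exists 0 | exists 1]; rewrite sL_edge; split; try lra.
Qed.

Lemma Ibm_iff k x0 y0 h s D nv i :
  Ibar_minus k x0 y0 h s D nv i <->
  IBm (uv k x0 y0 h s D nv i) (uv k x0 y0 h s D nv (nxt k i)).
Proof.
  unfold Ibar_minus, IBm. rewrite int_iff. simpl.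
  assert (I_minus k x0 y0 h s D nv i <->
     (0 <= uv k x0 y0 h s D nv i /\ 0 <= uv k x0 y0 h s D nv (nxt k i))).
  { unfold I_minus. split.
    - intros H. pose proof (H 0 ltac:(lra)). pose proof (H 1 ltac:(lra)).
      rewrite sL_edge in *. split; lra.
    - intros [A B] t Ht. rewrite sL_edge. nra. }
  tauto.
Qed.

Lemma Ibp_iff k x0 y0 h s D nv i :
  Ibar_plus k x0 y0 h s D nv i <->
  IBp (uv k x0 y0 h s D nv i) (uv k x0 y0 h s D nv (nxt k i)).
Proof.
  unfold Ibar_plus, IBp. rewrite int_iff. simpl.
  assert (I_plus k x0 y0 h s D nv i <->
     (uv k x0 y0 h s D nv i <= 0 /\ uv k x0 y0 h s D nv (nxt k i) <= 0)).
  { unfold I_plus. split.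
    - intros H. pose proof (H 0 ltac:(lra)). pose proof (H 1 ltac:(lra)).
      rewrite sL_edge in *. split; lra.
    - intros [A B] t Ht. rewrite sL_edge. nra. }
  tauto.
Qed.
Lemma Pf_nn u v : u <= 0 -> v <= 0 -> Pf u v = 0.
Proof. intros. unfold Pf. destruct (Rle_dec 0 u); destruct (Rle_dec 0 v).
  - replace u with 0 by lra; replace v with 0 by lra; field.
  - replace u with 0 by lra. unfold Rdiv. ring.
  - replace v with 0 by lra. unfold Rdiv. ring.
  - reflexivity. Qed.
Lemma Pf_pp u v : 0 <= u -> 0 <= v -> Pf u v = (u+v)/2.
Proof. intros. unfold Pf. destruct (Rle_dec 0 u); destruct (Rle_dec 0 v); try lra. Qed.
Lemma Pf_pn u v : 0 < u -> v <= 0 -> Pf u v = u*u/(2*(u-v)).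
Proof. intros. unfold Pf. destruct (Rle_dec 0 u); destruct (Rle_dec 0 v); try lra.
  replace v with 0 by lra. field. lra. Qed.
Lemma Pf_np u v : u <= 0 -> 0 < v -> Pf u v = v*v/(2*(v-u)).
Proof. intros. unfold Pf. destruct (Rle_dec 0 u); destruct (Rle_dec 0 v); try lra.
  replace u with 0 by lra. field. lra. Qed.

Ltac pfsimp := repeat (first [rewrite Pf_pp by lra | rewrite Pf_nn by lra
                              | rewrite Pf_pn by lra | rewrite Pf_np by lra]).

Lemma pbool_t (P : Prop) : P -> pbool P = true.
Proof. unfold pbool; destruct (excluded_middle_informative P); tauto. Qed.
Lemma pbool_f (P : Prop) : ~ P -> pbool P = false.
Proof. unfold pbool; destruct (excluded_middle_informative P); tauto. Qed.
Lemma pb_le1 (P : Prop) : ((if pbool P then 1 else 0) <= 1)%nat.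
Proof. destruct (pbool P); lia. Qed.

Ltac solveIB := unfold IBm, IBp;
  first [ left; split; lra | right; split; first [left; lra | right; lra];
          first [left; lra | right; lra] ].
Ltac refuteIB := unfold IBm, IBp; let H := fresh in intro H;
  destruct H as [[? ?]|[[?|?] [?|?]]]; lra.

Ltac evalpb :=
  repeat match goal with
  | H : context [pbool ?P] |- _ =>
      first [ rewrite (pbool_t P) in H by solveIB
            | rewrite (pbool_f P) in H by refuteIB
            | let e := fresh "e" in set (e := if pbool P then 1%nat else 0%nat) in H;
              assert ((e <= 1)%nat) by apply pb_le1; clearbody e ]
  end.

Ltac splitz := repeat match goal with
  | H : ~ 0 < ?x |- _ => let H1 := fresh in destruct (Req_dec x 0) as [H1|H1];
      [clear H | assert (x < 0) by lra; clear H H1]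
  end.

Lemma frac_eq X N Y : X = N / Y -> X = N / Y.
Proof. auto. Qed.
Lemma frac01 N Y : 0 < Y -> 0 <= N -> N <= Y -> 0 <= N / Y <= 1.
Proof. intros. split. unfold Rdiv; apply Rmult_le_pos; [lra| left; apply Rinv_0_lt_compat; lra].
  apply Rmult_le_reg_r with Y; auto. unfold Rdiv. rewrite Rmult_assoc, Rinv_l; lra. Qed.

Definition Stri (u0 p q : R) :=
  2 * (- q * Pf u0 (u0+p) + (p+q) * Pf (u0+p) (u0+q) - p * Pf (u0+q) u0) / (p*p + q*q).

Lemma tri_pure (u0 p q : R) :
  0 < p*p + q*q ->
  ((0 + (if pbool (IBm u0 (u0+p)) then 1 else 0) + (if pbool (IBm (u0+p) (u0+q)) then 1 else 0)
      + (if pbool (IBm (u0+q) u0) then 1 else 0)) <=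
   (0 + (if pbool (IBp u0 (u0+p)) then 1 else 0) + (if pbool (IBp (u0+p) (u0+q)) then 1 else 0)
      + (if pbool (IBp (u0+q) u0) then 1 else 0)))%nat ->
  0 <= Stri u0 p q <= 1.
Proof.
  intros Hh Hc. unfold Stri.
  destruct (Rlt_dec 0 u0); destruct (Rlt_dec 0 (u0+p)); destruct (Rlt_dec 0 (u0+q));
  pfsimp.
  all: try (splitz; evalpb; simpl in Hc; lia).
  - match goal with |- 0 <= ?X <= 1 => replace X with ((u0*u0)/(p*q)) by (field; repeat split; nra) end.
    apply frac01; nra.
  - match goal with |- 0 <= ?X <= 1 => replace X with (((u0+p)*(u0+p))/(p*(p-q))) by (field; repeat split; nra) end.
    apply frac01; nra.
  - match goal with |- 0 <= ?X <= 1 => replace X with (((u0+q)*(u0+q))/(q*(q-p))) by (field; repeat split; nra) end.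
    apply frac01; nra.
  - replace (2 * (- q * 0 + (p + q) * 0 - p * 0) / (p * p + q * q)) with 0 by (field; lra). lra.
Qed.
Definition n0f (s0 s1 : R) := 5/4*s0 - 3/2*s0*s1 + 7/4*s0*s1^2 - 3*s0^2 - 5/4*s0^2*s1 + 11/4*s0^3 + 5/4*s1 - 1/4*s1^3.
Lemma bt (x y c : R) a b e f : 0 <= x <= 1 -> 0 <= y <= 1 -> 0 <= c ->
  0 <= c*(x^a*(1-x)^b)*(y^e*(1-y)^f).
Proof. intros. repeat apply Rmult_le_pos; auto; apply pow_le; lra. Qed.
Ltac bpos := repeat apply Rplus_le_le_0_compat; apply bt; lra.
Lemma n0_low s0 s1 : 0 <= s0 <= 1 -> 0 <= s1 <= 1 -> 0 <= n0f s0 s1.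
Proof. intros. replace (n0f s0 s1) with ((5/4)*(s0^0*(1-s0)^4)*(s1^1*(1-s1)^3) + (15/4)*(s0^0*(1-s0)^4)*(s1^2*(1-s1)^2) + (7/2)*(s0^0*(1-s0)^4)*(s1^3*(1-s1)^1) + (1)*(s0^0*(1-s0)^4)*(s1^4*(1-s1)^0) + (5/4)*(s0^1*(1-s0)^3)*(s1^0*(1-s1)^4) + (17/2)*(s0^1*(1-s0)^3)*(s1^1*(1-s1)^3) + (79/4)*(s0^1*(1-s0)^3)*(s1^2*(1-s1)^2) + (18)*(s0^1*(1-s0)^3)*(s1^3*(1-s1)^1) + (11/2)*(s0^1*(1-s0)^3)*(s1^4*(1-s1)^0) + (3/4)*(s0^2*(1-s0)^2)*(s1^0*(1-s1)^4) + (19/4)*(s0^2*(1-s0)^2)*(s1^1*(1-s1)^3) + (15)*(s0^2*(1-s0)^2)*(s1^2*(1-s1)^2) + (69/4)*(s0^2*(1-s0)^2)*(s1^3*(1-s1)^1) + (25/4)*(s0^2*(1-s0)^2)*(s1^4*(1-s1)^0) + (1/2)*(s0^3*(1-s0)^1)*(s1^0*(1-s1)^4) + (9/4)*(s0^3*(1-s0)^1)*(s1^2*(1-s1)^2) + (11/2)*(s0^3*(1-s0)^1)*(s1^3*(1-s1)^1) + (11/4)*(s0^3*(1-s0)^1)*(s1^4*(1-s1)^0) + (1)*(s0^4*(1-s0)^0)*(s1^0*(1-s1)^4) + (5/2)*(s0^4*(1-s0)^0)*(s1^1*(1-s1)^3) + (13/4)*(s0^4*(1-s0)^0)*(s1^2*(1-s1)^2)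 + (11/4)*(s0^4*(1-s0)^0)*(s1^3*(1-s1)^1) + (1)*(s0^4*(1-s0)^0)*(s1^4*(1-s1)^0)) by (unfold n0f; field). bpos. Qed.
Lemma n0_up s0 s1 : 0 <= s0 <= 1 -> 0 <= s1 <= 1 -> 0 <= 1 + (s1-s0)^2 - n0f s0 s1.
Proof. intros. replace (1 + (s1-s0)^2 - n0f s0 s1) with ((1)*(s0^0*(1-s0)^4)*(s1^0*(1-s1)^4) + (11/4)*(s0^0*(1-s0)^4)*(s1^1*(1-s1)^3) + (13/4)*(s0^0*(1-s0)^4)*(s1^2*(1-s1)^2) + (5/2)*(s0^0*(1-s0)^4)*(s1^3*(1-s1)^1) + (1)*(s0^0*(1-s0)^4)*(s1^4*(1-s1)^0) + (11/4)*(s0^1*(1-s0)^3)*(s1^0*(1-s1)^4) + (11/2)*(s0^1*(1-s0)^3)*(s1^1*(1-s1)^3) + (9/4)*(s0^1*(1-s0)^3)*(s1^2*(1-s1)^2) + (1/2)*(s0^1*(1-s0)^3)*(s1^4*(1-s1)^0) + (25/4)*(s0^2*(1-s0)^2)*(s1^0*(1-s1)^4) + (69/4)*(s0^2*(1-s0)^2)*(s1^1*(1-s1)^3) + (15)*(s0^2*(1-s0)^2)*(s1^2*(1-s1)^2) + (19/4)*(s0^2*(1-s0)^2)*(s1^3*(1-s1)^1) + (3/4)*(s0^2*(1-s0)^2)*(s1^4*(1-s1)^0) + (11/2)*(s0^3*(1-s0)^1)*(s1^0*(1-s1)^4) + (18)*(s0^3*(1-s0)^1)*(s1^1*(1-s1)^3)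 + (79/4)*(s0^3*(1-s0)^1)*(s1^2*(1-s1)^2) + (17/2)*(s0^3*(1-s0)^1)*(s1^3*(1-s1)^1) + (5/4)*(s0^3*(1-s0)^1)*(s1^4*(1-s1)^0) + (1)*(s0^4*(1-s0)^0)*(s1^0*(1-s1)^4) + (7/2)*(s0^4*(1-s0)^0)*(s1^1*(1-s1)^3) + (15/4)*(s0^4*(1-s0)^0)*(s1^2*(1-s1)^2) + (5/4)*(s0^4*(1-s0)^0)*(s1^3*(1-s1)^1)) by (unfold n0f; field). bpos. Qed.
Definition Gf (t1 t2 : R) := t1*t2*(5/2*(t1^2+t2^2) - 3*t1*t2 - 3*t1^2*t2 + 3*t1*t2^2).
Lemma G_up t1 t2 : 0 <= t1 <= 1 -> 0 <= t2 <= 1 -> 0 <= 2*(t1^2+t2^2) - Gf t1 t2.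
Proof. intros. replace (2*(t1^2+t2^2) - Gf t1 t2) with ((2)*(t1^0*(1-t1)^3)*(t2^2*(1-t2)^1) + (2)*(t1^0*(1-t1)^3)*(t2^3*(1-t2)^0) + (6)*(t1^1*(1-t1)^2)*(t2^2*(1-t2)^1) + (7/2)*(t1^1*(1-t1)^2)*(t2^3*(1-t2)^0) + (2)*(t1^2*(1-t1)^1)*(t2^0*(1-t2)^3) + (6)*(t1^2*(1-t1)^1)*(t2^1*(1-t2)^2) + (15)*(t1^2*(1-t1)^1)*(t2^2*(1-t2)^1) + (3)*(t1^2*(1-t1)^1)*(t2^3*(1-t2)^0) + (2)*(t1^3*(1-t1)^0)*(t2^0*(1-t2)^3) + (7/2)*(t1^3*(1-t1)^0)*(t2^1*(1-t2)^2) + (9)*(t1^3*(1-t1)^0)*(t2^2*(1-t2)^1) + (2)*(t1^3*(1-t1)^0)*(t2^3*(1-t2)^0)) by (unfold Gf; field). bpos. Qed.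

Lemma G_low t1 t2 : 0 <= t1 <= 1 -> 0 <= t2 <= 1 -> 0 <= Gf t1 t2.
Proof. intros. unfold Gf. apply Rmult_le_pos. apply Rmult_le_pos; lra.
  destruct (Rle_dec t2 t1).
  - assert (0 <= t2*(t1-t2)) by (apply Rmult_le_pos; lra).
    assert (0 <= (1-t1)*(t2*(t1-t2))) by (apply Rmult_le_pos; lra).
    assert (0 <= (t1 - 6/5*t2)^2) by apply pow2_ge_0.
    assert (0 <= t2^2) by apply pow2_ge_0. nra.
  - assert (0 <= t1*t2*(t2-t1)) by (apply Rmult_le_pos; nra).
    assert (0 <= (t1 - t2)^2) by apply pow2_ge_0.
    assert (0 <= t2^2) by apply pow2_ge_0. assert (0 <= t1^2) by apply pow2_ge_0. nra.
Qed.

Definition nn s0 s1 X := let d := s1 - s0 in let xi := X - 1/2 in let eta := s0 + d*X - 1/2 in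
 (-3*xi*d + 1 - 3*eta)*(s0+s1)/2 + ((1+3*xi)*d + 3*eta)*s1*s1/2 + ((-1+3*xi)*d + 3*eta)*s0*s0/2.

Lemma half_gen s0 s1 X : 0 <= s0 <= 1 -> 0 <= s1 <= 1 -> 0 <= X <= 1 ->
  0 <= nn s0 s1 X / (1 + (s1-s0)^2) <= 1.
Proof.
  intros. assert (E : nn s0 s1 X = (1-X) * n0f s0 s1 + X * n0f s1 s0) by (unfold nn, n0f; field).
  pose proof (n0_low s0 s1 H H0). pose proof (n0_low s1 s0 H0 H).
  pose proof (n0_up s0 s1 H H0). pose proof (n0_up s1 s0 H0 H).
  replace ((s0 - s1)^2) with ((s1-s0)^2) in H5 by ring.
  apply frac01. nra. rewrite E. nra. rewrite E. nra.
Qed.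

Lemma sq_sum_nz x y : x <> 0 -> x^2 + y^2 <> 0.
Proof. intros. apply Rgt_not_eq. pose proof (Rsqr_pos_lt x H). unfold Rsqr in H0.
  assert (0 <= y^2) by apply pow2_ge_0. simpl. nra. Qed.

Definition Kc t1 t2 w := t1*t2*(5/2*(t1^2+t2^2) + t1*t2*(3*(2*w-1)*(t1-t2) - 3)).

Lemma corner_gen t1 t2 w : 0 < t1 <= 1 -> 0 < t2 <= 1 -> 0 <= w <= 1 ->
  0 <= Kc t1 t2 w / (2*(t1^2+t2^2)) <= 1.
Proof.
  intros. assert (E : Kc t1 t2 w = (1-w) * Gf t1 t2 + w * Gf t2 t1) by (unfold Kc, Gf; field).
  assert (A1 : 0 <= t1 <= 1) by lra. assert (A2 : 0 <= t2 <= 1) by lra.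
  pose proof (G_low t1 t2 A1 A2). pose proof (G_low t2 t1 A2 A1).
  pose proof (G_up t1 t2 A1 A2). pose proof (G_up t2 t1 A2 A1).
  apply frac01. nra. rewrite E. nra. rewrite E. nra.
Qed.

Definition Srect u0 a c xi eta :=
  ((-3*xi*a + (-1+3*eta)*c) * Pf u0 (u0+a) + ((1+3*xi)*a - 3*eta*c) * Pf (u0+a) (u0+a+c)
   + (-3*xi*a + (1+3*eta)*c) * Pf (u0+a+c) (u0+c) + ((-1+3*xi)*a - 3*eta*c) * Pf (u0+c) u0)
  / (a*a + c*c).

Lemma rect_pure (u0 a c xi eta : R) :
  0 < a*a + c*c -> -1/2 <= xi <= 1/2 -> -1/2 <= eta <= 1/2 ->
  u0 = -(a*(xi+1/2)) - c*(eta+1/2) ->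
  ((0 + (if pbool (IBm u0 (u0+a)) then 1 else 0) + (if pbool (IBm (u0+a) (u0+a+c)) then 1 else 0)
      + (if pbool (IBm (u0+a+c) (u0+c)) then 1 else 0) + (if pbool (IBm (u0+c) u0) then 1 else 0)) <=
   (0 + (if pbool (IBp u0 (u0+a)) then 1 else 0) + (if pbool (IBp (u0+a) (u0+a+c)) then 1 else 0)
      + (if pbool (IBp (u0+a+c) (u0+c)) then 1 else 0) + (if pbool (IBp (u0+c) u0) then 1 else 0)))%nat ->
  0 <= Srect u0 a c xi eta <= 1.
Proof.
  intros Hh Hx He Hu Hc. unfold Srect.
  destruct (Rlt_dec 0 u0); destruct (Rlt_dec 0 (u0+a)); destruct (Rlt_dec 0 (u0+a+c));
  destruct (Rlt_dec 0 (u0+c)); try lra; pfsimp.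
  all: try (splitz; evalpb; simpl in Hc; lia).

  - (* half bottom *)
    assert (c < 0) by lra.
    match goal with |- 0 <= ?X <= 1 => replace X with
      (nn (u0/(-c)) ((u0+a)/(-c)) (xi+1/2) / (1 + ((u0+a)/(-c) - u0/(-c))^2))
      by (unfold nn; subst u0; field; repeat split; first [lra | nra]) end.
    apply half_gen; [apply frac01; lra | apply frac01; lra | lra].
  - (* half left *)
    assert (a < 0) by lra.
    match goal with |- 0 <= ?X <= 1 => replace X with
      (nn (u0/(-a)) ((u0+c)/(-a)) (eta+1/2) / (1 + ((u0+c)/(-a) - u0/(-a))^2))
      by (unfold nn; subst u0; field; repeat split; first [lra | nra]) end.
    apply half_gen; [apply frac01; lra | apply frac01; lra | lra].
  - (* corner V0 *)
    assert (a < 0) by lra. assert (c < 0) by lra.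
    assert (0 <= -c*(eta+1/2)) by nra. assert (0 <= -a*(xi+1/2)) by nra.
    match goal with |- 0 <= ?X <= 1 => replace X with
      (Kc (u0/(-a)) (u0/(-c)) ((-a)*(xi+1/2)/u0) / (2*((u0/(-a))^2+(u0/(-c))^2)))
      by (assert (Heta : eta = (-u0 - a*(xi+1/2))/c - 1/2) by (subst u0; field; lra);
          rewrite Heta; unfold Kc; field; repeat split;
          first [lra | apply sq_sum_nz; apply Rmult_integral_contrapositive_currified; lra | nra]) end.
    apply corner_gen; [split; [apply Rdiv_lt_0_compat; lra | apply frac01; lra]
      | split; [apply Rdiv_lt_0_compat; lra | apply frac01; lra] | apply frac01; lra].
  - (* half right *)
    assert (0 < a) by lra.
    match goal with |- 0 <= ?X <= 1 => replace X with
      (nn ((u0+a)/a) ((u0+a+c)/a) (eta+1/2) / (1 + ((u0+a+c)/a - (u0+a)/a)^2))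
      by (unfold nn; subst u0; field; repeat split; first [lra | nra]) end.
    apply half_gen; [apply frac01; lra | apply frac01; lra | lra].
  - (* corner V1 *)
    assert (0 < a) by lra. assert (c < 0) by lra.
    assert (0 <= -c*(eta+1/2)) by nra. assert (0 <= a*(1/2-xi)) by nra.
    match goal with |- 0 <= ?X <= 1 => replace X with
      (Kc ((u0+a)/a) ((u0+a)/(-c)) (a*(1/2-xi)/(u0+a)) / (2*(((u0+a)/a)^2+((u0+a)/(-c))^2)))
      by (assert (Heta : eta = (-u0 - a*(xi+1/2))/c - 1/2) by (subst u0; field; lra);
          rewrite Heta; unfold Kc; field; repeat split;
          first [lra | apply sq_sum_nz; apply Rmult_integral_contrapositive_currified; lra | nra]) end.
    apply corner_gen; [split; [apply Rdiv_lt_0_compat; lra | apply frac01; lra]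
      | split; [apply Rdiv_lt_0_compat; lra | apply frac01; lra] | apply frac01; lra].
  - (* half top *)
    assert (0 < c) by lra.
    match goal with |- 0 <= ?X <= 1 => replace X with
      (nn ((u0+c)/c) ((u0+a+c)/c) (xi+1/2) / (1 + ((u0+a+c)/c - (u0+c)/c)^2))
      by (unfold nn; subst u0; field; repeat split; first [lra | nra]) end.
    apply half_gen; [apply frac01; lra | apply frac01; lra | lra].
  - (* corner V2 *)
    assert (0 < a) by lra. assert (0 < c) by lra.
    assert (0 <= c*(1/2-eta)) by nra. assert (0 <= a*(1/2-xi)) by nra.
    match goal with |- 0 <= ?X <= 1 => replace X with
      (Kc ((u0+a+c)/a) ((u0+a+c)/c) (a*(1/2-xi)/(u0+a+c)) / (2*(((u0+a+c)/a)^2+((u0+a+c)/c)^2)))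
      by (assert (Heta : eta = (-u0 - a*(xi+1/2))/c - 1/2) by (subst u0; field; lra);
          rewrite Heta; unfold Kc; field; repeat split;
          first [lra | apply sq_sum_nz; apply Rmult_integral_contrapositive_currified; lra | nra]) end.
    apply corner_gen; [split; [apply Rdiv_lt_0_compat; lra | apply frac01; lra]
      | split; [apply Rdiv_lt_0_compat; lra | apply frac01; lra] | apply frac01; lra].
  - (* corner V3 *)
    assert (a < 0) by lra. assert (0 < c) by lra.
    assert (0 <= c*(1/2-eta)) by nra. assert (0 <= -a*(xi+1/2)) by nra.
    match goal with |- 0 <= ?X <= 1 => replace X with
      (Kc ((u0+c)/(-a)) ((u0+c)/c) ((-a)*(xi+1/2)/(u0+c)) / (2*(((u0+c)/(-a))^2+((u0+c)/c)^2)))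
      by (assert (Heta : eta = (-u0 - a*(xi+1/2))/c - 1/2) by (subst u0; field; lra);
          rewrite Heta; unfold Kc; field; repeat split;
          first [lra | apply sq_sum_nz; apply Rmult_integral_contrapositive_currified; lra | nra]) end.
    apply corner_gen; [split; [apply Rdiv_lt_0_compat; lra | apply frac01; lra]
      | split; [apply Rdiv_lt_0_compat; lra | apply frac01; lra] | apply frac01; lra].
  - match goal with |- 0 <= ?X <= 1 => replace X with 0 by (field; lra) end. lra.
Qed.
Lemma delta_val k x0 y0 h s D nv i d :
  (s = 1 \/ s = -1) ->
  edge_avg_is (L_minus s D nv) k x0 y0 h i d ->
  d = s * Pf (uv k x0 y0 h s D nv i) (uv k x0 y0 h s D nv (nxt k i)).
Proof.
  intros Hs [pr Hpr]. rewrite <- Hpr.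
  set (a := Lfun D nv (vert k x0 y0 h i)).
  set (b := Lfun D nv (vert k x0 y0 h (nxt k i)) - a).
  rewrite (riemann_pos _ s a b pr Hs).
  - unfold uv. fold a. replace (a + b) with (Lfun D nv (vert k x0 y0 h (nxt k i))) by (unfold b; ring).
    reflexivity.
  - intros t. unfold L_minus. rewrite L_edge. fold a. fold b. reflexivity.
Qed.

Lemma avg_piT k a x0 y0 h j v : (j < nedges k)%nat ->
  edge_avg_is (piT k a) k x0 y0 h j v ->
  v = (piT k a (edge_pt k x0 y0 h j 0) + 4 * piT k a (edge_pt k x0 y0 h j (1/2))
       + piT k a (edge_pt k x0 y0 h j 1)) / 6.
Proof.
  intros Hj [pr Hpr]. rewrite <- Hpr. apply riemann_simpson.
  set (f := fun t => piT k a (edge_pt k x0 y0 h j t)).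
  exists (f 0), (f 1 - f 0 - 2*(f 1 - 2*f (1/2) + f 0)), (2*(f 1 - 2*f (1/2) + f 0)).
  intros t. unfold f.
  destruct k as [b1 b2|]; simpl in Hj;
   (destruct j as [|[|[|[|j]]]]; [| | | |lia]);
   try lia; unfold piT, edge_pt, basis; simpl; field.
Qed.

Definition bvec (k : elem_kind) (x0 y0 h : R) (F nv : R * R) (i : nat) : R :=
  match k with
  | Tri b1 b2 =>
    match i with
    | O => -2 * snd nv / (sgnb b2 * h)
    | S O => 2 * (fst nv / (sgnb b1 * h) + snd nv / (sgnb b2 * h))
    | _ => -2 * fst nv / (sgnb b1 * h)
    end
  | Rect =>
    let xi := (fst F - x0) / h - 1/2 in let eta := (snd F - y0) / h - 1/2 in
    match i with
    | O => (-3*xi*fst nv + (-1+3*eta)*snd nv)/h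
    | S O => ((1+3*xi)*fst nv - 3*eta*snd nv)/h
    | S (S O) => (-3*xi*fst nv + (1+3*eta)*snd nv)/h
    | _ => ((-1+3*xi)*fst nv - 3*eta*snd nv)/h
    end
  end.

Lemma comb3 G b0 b1 b2 e0 e1 e2 v0 v1 v2 r :
  G = b0*e0+b1*e1+b2*e2 -> v0 = e0 -> v1 = e1 -> v2 = e2 -> r = b0*v0+b1*v1+b2*v2 -> G = r.
Proof. intros; subst; auto. Qed.
Lemma comb4 G b0 b1 b2 b3 e0 e1 e2 e3 v0 v1 v2 v3 r :
  G = b0*e0+b1*e1+b2*e2+b3*e3 -> v0 = e0 -> v1 = e1 -> v2 = e2 -> v3 = e3 ->
  r = b0*v0+b1*v1+b2*v2+b3*v3 -> G = r.
Proof. intros; subst; auto. Qed.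

Lemma gamma_eq k x0 y0 h (c : nat -> nat -> R) F nv i : 0 < h ->
  (forall i j, (i < nedges k)%nat -> (j < nedges k)%nat ->
     edge_avg_is (piT k (c i)) k x0 y0 h j (if Nat.eqb i j then 1 else 0)) ->
  (i < nedges k)%nat ->
  grad_dot k (c i) F nv = bvec k x0 y0 h F nv i.
Proof.
  intros Hh H Hi.
  destruct k as [b1 b2|]; simpl in Hi.
  - assert (E0 := avg_piT (Tri b1 b2) (c i) x0 y0 h 0 _ ltac:(simpl; lia) (H i 0%nat Hi ltac:(simpl; lia))).
    assert (E1 := avg_piT (Tri b1 b2) (c i) x0 y0 h 1 _ ltac:(simpl; lia) (H i 1%nat Hi ltac:(simpl; lia))).
    assert (E2 := avg_piT (Tri b1 b2) (c i) x0 y0 h 2 _ ltac:(simpl; lia) (H i 2%nat Hi ltac:(simpl; lia))).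
    eapply comb3 with (b0 := bvec (Tri b1 b2) x0 y0 h F nv 0) (b1 := bvec (Tri b1 b2) x0 y0 h F nv 1)
      (b2 := bvec (Tri b1 b2) x0 y0 h F nv 2); [ | exact E0 | exact E1 | exact E2 | ].
    + unfold grad_dot, bvec, piT, edge_pt, basis, basis_dx, basis_dy; simpl.
      destruct b1, b2; simpl; field; lra.
    + destruct i as [|[|[|i]]]; simpl; try lia; ring.
  - assert (E0 := avg_piT Rect (c i) x0 y0 h 0 _ ltac:(simpl; lia) (H i 0%nat Hi ltac:(simpl; lia))).
    assert (E1 := avg_piT Rect (c i) x0 y0 h 1 _ ltac:(simpl; lia) (H i 1%nat Hi ltac:(simpl; lia))).
    assert (E2 := avg_piT Rect (c i) x0 y0 h 2 _ ltac:(simpl; lia) (H i 2%nat Hi ltac:(simpl; lia))).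
    assert (E3 := avg_piT Rect (c i) x0 y0 h 3 _ ltac:(simpl; lia) (H i 3%nat Hi ltac:(simpl; lia))).
    eapply comb4 with (b0 := bvec Rect x0 y0 h F nv 0) (b1 := bvec Rect x0 y0 h F nv 1)
      (b2 := bvec Rect x0 y0 h F nv 2) (b3 := bvec Rect x0 y0 h F nv 3);
      [ | exact E0 | exact E1 | exact E2 | exact E3 | ].
    + unfold grad_dot, bvec, piT, edge_pt, basis, basis_dx, basis_dy; simpl.
      field; lra.
    + destruct i as [|[|[|[|i]]]]; simpl; try lia; ring.
Qed.

Lemma notIBm u v : ~ IBm u v -> u <= 0 /\ v <= 0.
Proof. intros H. unfold IBm in H.
  destruct (Rle_dec u 0); destruct (Rle_dec v 0); try (split; assumption);
  exfalso; apply H; right; split; lra. Qed.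

Lemma rect_on_edge x0 y0 h j X : 0 < h -> (j < 4)%nat -> on_edge Rect x0 y0 h j X ->
  x0 <= fst X <= x0 + h /\ y0 <= snd X <= y0 + h.
Proof. intros Hh Hj [t [Ht ->]].
  destruct j as [|[|[|[|j]]]]; try lia; unfold edge_pt; simpl; split; split; nra. Qed.

Lemma tri_wrap u0 u1 u2 :
  0 < (u1-u0)*(u1-u0) + (u2-u0)*(u2-u0) ->
  ((0 + (if pbool (IBm u0 u1) then 1 else 0) + (if pbool (IBm u1 u2) then 1 else 0)
      + (if pbool (IBm u2 u0) then 1 else 0)) <=
   (0 + (if pbool (IBp u0 u1) then 1 else 0) + (if pbool (IBp u1 u2) then 1 else 0)
      + (if pbool (IBp u2 u0) then 1 else 0)))%nat ->
  0 <= Stri u0 (u1-u0) (u2-u0) <= 1.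
Proof. intros H Hc. apply tri_pure; auto.
  replace (u0 + (u1-u0)) with u1 by ring. replace (u0 + (u2-u0)) with u2 by ring. exact Hc. Qed.

Lemma rect_wrap u0 u1 u2 u3 xi eta :
  u2 = u1 + u3 - u0 ->
  0 < (u1-u0)*(u1-u0) + (u3-u0)*(u3-u0) -> -1/2 <= xi <= 1/2 -> -1/2 <= eta <= 1/2 ->
  u0 = -((u1-u0)*(xi+1/2)) - (u3-u0)*(eta+1/2) ->
  ((0 + (if pbool (IBm u0 u1) then 1 else 0) + (if pbool (IBm u1 u2) then 1 else 0)
      + (if pbool (IBm u2 u3) then 1 else 0) + (if pbool (IBm u3 u0) then 1 else 0)) <=
   (0 + (if pbool (IBp u0 u1) then 1 else 0) + (if pbool (IBp u1 u2) then 1 else 0)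
      + (if pbool (IBp u2 u3) then 1 else 0) + (if pbool (IBp u3 u0) then 1 else 0)))%nat ->
  0 <= Srect u0 (u1-u0) (u3-u0) xi eta <= 1.
Proof. intros H2 H Hx He Hu Hc. apply rect_pure; auto.
  replace (u0 + (u1-u0)) with u1 by ring. replace (u1 + (u3-u0)) with u2 by lra.
  replace (u0 + (u3-u0)) with u3 by ring. exact Hc. Qed.

Theorem mainTheorem3
  (k : elem_kind) (x0 y0 h : R)
  (c : nat -> nat -> R)          (* c i = coefficients of psi_{i,T} *)
  (D E F nv : R * R) (sigma : R)
  (delta : nat -> R) :
  0 < h ->
  (* psi_{i,T} in Pi_T are the shape functions *)
  (forall i j, (i < nedges k)%nat -> (j < nedges k)%nat ->
     edge_avg_is (piT k (c i)) k x0 y0 h j (if Nat.eqb i j then 1 else 0)) ->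
  (* D, E on the boundary, lying on different edges *)
  (exists j, (j < nedges k)%nat /\ on_edge k x0 y0 h j D) ->
  (exists j, (j < nedges k)%nat /\ on_edge k x0 y0 h j E) ->
  ~ (exists j, (j < nedges k)%nat /\ on_edge k x0 y0 h j D /\ on_edge k x0 y0 h j E) ->
  (* nbar a unit normal to l = DE *)
  fst nv ^ 2 + snd nv ^ 2 = 1 ->
  fst nv * (fst E - fst D) + snd nv * (snd E - snd D) = 0 ->
  (* F in l *)
  (exists s, 0 <= s <= 1 /\
     F = (fst D + s * (fst E - fst D), snd D + s * (snd E - snd D))) ->
  (* labelling of the two sides *)
  (sigma = 1 \/ sigma = -1) ->
  (card_idx (nedges k) (Ibar_minus k x0 y0 h sigma D nv) <=
   card_idx (nedges k) (Ibar_plus k x0 y0 h sigma D nv))%nat ->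
  (* delta_i = (1/|b_i|) \int_{b_i cap T^-} L ds *)
  (forall i, (i < nedges k)%nat -> Ibar_minus k x0 y0 h sigma D nv i ->
     edge_avg_is (L_minus sigma D nv) k x0 y0 h i (delta i)) ->
  0 <= sum_idx (nedges k) (Ibar_minus k x0 y0 h sigma D nv)
         (fun i => grad_dot k (c i) F nv * delta i) <= 1.
Proof.
  intros Hh Hshape HD HE HDE Hnv Hperp HF Hs Hcard Hdelta.
  assert (Hss : sigma * sigma = 1) by (destruct Hs; subst; lra).
  rewrite sum_idx_sumR.
  rewrite (sumR_ext _ _ (fun i => sigma * bvec k x0 y0 h F nv i *
      Pf (uv k x0 y0 h sigma D nv i) (uv k x0 y0 h sigma D nv (nxt k i)))).
  2:{ intros i Hi. unfold pbool. destruct (excluded_middle_informative _) as [Hm|Hm].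
      - rewrite (gamma_eq k x0 y0 h c F nv i Hh Hshape Hi).
        rewrite (delta_val k x0 y0 h sigma D nv i (delta i) Hs (Hdelta i Hi Hm)). ring.
      - rewrite Ibm_iff in Hm. apply notIBm in Hm. rewrite Pf_nn by tauto. ring. }
  rewrite !card_idx_sumN in Hcard.
  rewrite (sumN_ext _ (fun i => if pbool (Ibar_minus k x0 y0 h sigma D nv i) then 1%nat else 0%nat) (fun i => if pbool (IBm (uv k x0 y0 h sigma D nv i)
       (uv k x0 y0 h sigma D nv (nxt k i))) then 1%nat else 0%nat)) in Hcard
    by (intros; rewrite (pbool_iff _ _ (Ibm_iff k x0 y0 h sigma D nv i)); reflexivity).
  rewrite (sumN_ext _ (fun i => if pbool (Ibar_plus k x0 y0 h sigma D nv i) then 1%nat else 0%nat) (fun i => if pbool (IBp (uv k x0 y0 h sigma D nv i)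
       (uv k x0 y0 h sigma D nv (nxt k i))) then 1%nat else 0%nat)) in Hcard
    by (intros; rewrite (pbool_iff _ _ (Ibp_iff k x0 y0 h sigma D nv i)); reflexivity).
  set (u := uv k x0 y0 h sigma D nv) in *.
  destruct k as [b1 b2|].
  - unfold nxt in *. simpl in Hcard |- *.
    assert (Hu1 : u 1%nat - u 0%nat = sigma * sgnb b1 * h * fst nv) by (unfold u, uv, Lfun; simpl; ring).
    assert (Hu2 : u 2%nat - u 0%nat = sigma * sgnb b2 * h * snd nv) by (unfold u, uv, Lfun; simpl; ring).
    assert (Hden : (u 1%nat - u 0%nat) * (u 1%nat - u 0%nat) + (u 2%nat - u 0%nat) * (u 2%nat - u 0%nat) = h * h).
    { rewrite Hu1, Hu2.
      replace (sigma * sgnb b1 * h * fst nv * (sigma * sgnb b1 * h * fst nv) +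
               sigma * sgnb b2 * h * snd nv * (sigma * sgnb b2 * h * snd nv))
        with ((sigma*sigma) * h * h * ((sgnb b1 * sgnb b1) * fst nv ^ 2 + (sgnb b2 * sgnb b2) * snd nv ^ 2)) by ring.
      rewrite Hss. destruct b1, b2; simpl; nra. }
    assert (Hpos := tri_wrap (u 0%nat) (u 1%nat) (u 2%nat)).
    match goal with |- 0 <= ?X <= 1 => replace X with (Stri (u 0%nat) (u 1%nat - u 0%nat) (u 2%nat - u 0%nat)) end.
    + apply Hpos; [rewrite Hden; nra | exact Hcard].
    + unfold Stri. replace (u 0%nat + (u 1%nat - u 0%nat)) with (u 1%nat) by ring.
      replace (u 0%nat + (u 2%nat - u 0%nat)) with (u 2%nat) by ring.
      rewrite Hden, Hu1, Hu2. destruct b1, b2; simpl; field; lra.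
  - unfold nxt in *. simpl in Hcard |- *.
    assert (Ha : u 1%nat - u 0%nat = sigma * h * fst nv) by (unfold u, uv, Lfun; simpl; ring).
    assert (Hc : u 3%nat - u 0%nat = sigma * h * snd nv) by (unfold u, uv, Lfun; simpl; ring).
    assert (Hu2 : u 2%nat = u 1%nat + u 3%nat - u 0%nat) by (unfold u, uv, Lfun; simpl; ring).
    assert (Hden : (u 1%nat - u 0%nat) * (u 1%nat - u 0%nat) + (u 3%nat - u 0%nat) * (u 3%nat - u 0%nat) = h * h).
    { rewrite Ha, Hc.
      replace (sigma * h * fst nv * (sigma * h * fst nv) + sigma * h * snd nv * (sigma * h * snd nv))
        with ((sigma*sigma) * h * h * (fst nv ^ 2 + snd nv ^ 2)) by ring.
      rewrite Hss, Hnv. ring. }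
    destruct HF as [s [Hs01 HFe]].
    destruct HD as [jD [HjD HoD]]. destruct HE as [jE [HjE HoE]].
    apply rect_on_edge in HoD; auto. apply rect_on_edge in HoE; auto.
    assert (HLF : fst nv * (fst F - fst D) + snd nv * (snd F - snd D) = 0).
    { rewrite HFe. simpl. replace (fst nv * (fst D + s * (fst E - fst D) - fst D) +
        snd nv * (snd D + s * (snd E - snd D) - snd D)) with
        (s * (fst nv * (fst E - fst D) + snd nv * (snd E - snd D))) by ring.
      rewrite Hperp. ring. }
    assert (HFx : x0 <= fst F <= x0 + h) by (rewrite HFe; simpl; nra).
    assert (HFy : y0 <= snd F <= y0 + h) by (rewrite HFe; simpl; nra).
    set (xi := (fst F - x0) / h - 1/2).
    set (eta := (snd F - y0) / h - 1/2).
    assert (Hxi : -1/2 <= xi <= 1/2).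
    { unfold xi. split.
      - assert (0 <= (fst F - x0)/h) by (apply Rdiv_le_0_compat; lra). lra.
      - assert ((fst F - x0)/h <= 1). { apply Rmult_le_reg_r with h; auto.
          unfold Rdiv. rewrite Rmult_assoc, Rinv_l; lra. } lra. }
    assert (Heta : -1/2 <= eta <= 1/2).
    { unfold eta. split.
      - assert (0 <= (snd F - y0)/h) by (apply Rdiv_le_0_compat; lra). lra.
      - assert ((snd F - y0)/h <= 1). { apply Rmult_le_reg_r with h; auto.
          unfold Rdiv. rewrite Rmult_assoc, Rinv_l; lra. } lra. }
    assert (Hcon : u 0%nat = -((u 1%nat - u 0%nat)*(xi+1/2)) - (u 3%nat - u 0%nat)*(eta+1/2)).
    { rewrite Ha, Hc. unfold xi, eta.
      assert (u 0%nat - (-(sigma * h * fst nv * ((fst F - x0) / h - 1 / 2 + 1 / 2)) -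
          sigma * h * snd nv * ((snd F - y0) / h - 1 / 2 + 1 / 2)) =
          sigma * (fst nv * (fst F - fst D) + snd nv * (snd F - snd D))).
      { unfold u, uv, Lfun. simpl. field. lra. }
      rewrite HLF in H. lra. }
    assert (Hpos := rect_wrap (u 0%nat) (u 1%nat) (u 2%nat) (u 3%nat) xi eta Hu2).
    match goal with |- 0 <= ?X <= 1 => replace X with (Srect (u 0%nat) (u 1%nat - u 0%nat) (u 3%nat - u 0%nat) xi eta) end.
    + apply Hpos; auto. rewrite Hden; nra.
    + unfold Srect. replace (u 0%nat + (u 1%nat - u 0%nat)) with (u 1%nat) by ring.
      replace (u 1%nat + (u 3%nat - u 0%nat)) with (u 2%nat) by lra.
      replace (u 0%nat + (u 3%nat - u 0%nat)) with (u 3%nat) by ring.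
      rewrite Hden, Ha, Hc. unfold xi, eta. field. lra.
Qed.
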